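(* Let $A\to B$ be a homomorphism of $\mathbb{Z}$-algebras, and let $Q_j=\bigoplus_iB_{ij}$ ($j\in\mathbb{Z}$) be the indecomposable projective $B$-modules. Assume that $A$ is coherent and that all $Q_j$ are coherent as $A$-modules (via the homomorphism). Then $B$ is a coherent $\mathbb{Z}$-algebra.
   Context: $k$ is a fixed field. A $\mathbb{Z}$-algebra is an associative $k$-algebra $A=\bigoplus_{i\le j}A_{ij}$ ($i,j\in\mathbb{Z}$) with $A_{ii}=k$, only nonzero multiplication components $A_{jk}\otimes A_{ij}\to A_{ik}$, with $A_{jj}\otimes A_{ij}\to A_{ij}$ and $A_{ij}\otimes A_{ii}\to A_{ij}$ the identity maps; it is assumed $\dim_kA_{ij}<\infty$. A homomorphism of $\mathbb{Z}$-algebras respects the components $A_{ij}\to B_{ij}$. An $A$-module is a graded right module $M=\bigoplus_iM_i$ with action $M_j\otimes A_{ij}\to M_i$ ($M_i\otimes A_{ii}\to M_i$ the identity). $P_j=\bigoplus_iA_{ij}$; $S_j$ is the module with $(S_j)_j=k$, $(S_j)_i=0$ otherwise; $\mathcal{P}$ is the class of finite direct sums of $P_j$'s. $M$ is finitely generated if it is a quotient of some $P\in\mathcal{P}$; $M$ is coherent if it is finitely generated and for every $f:P\to M$ with $P\in\mathcal{P}$, $\ker f$ is finitely generated. $A$ is coherent (meaning right coherent) if all $P_j$ and all $S_j$ are coherent. *)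

(* Defs.v *)
From HB Require Import structures.
From mathcomp Require Import all_boot all_order all_algebra.
Set Implicit Arguments. Unset Strict Implicit. Unset Printing Implicit Defensive.
Import Order.TTheory GRing.Theory Num.Theory.
Local Open Scope ring_scope.

(* A Z-algebra over the field k: components A_ij (i,j : int), finite
   dimensional; multiplication A_jl (x) A_ij -> A_il; A_ii = k (spanned by
   the unit e_i, acting as identity); A_ij = 0 unless i <= j. *)
Record zalg (k : fieldType) := ZAlg {
  zc : int -> int -> vectType k;
  zmul : forall i j l, zc j l -> zc i j -> zc i l;
  zone : forall i, zc i i;
  zmulDl : forall i j l (x : k) (a a' : zc j l) (b : zc i j),
      zmul (x *: a + a') b = x *: zmul a b + zmul a' b;
  zmulDr : forall i j l (x : k) (a : zc j l) (b b' : zc i j),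
      zmul a (x *: b + b') = x *: zmul a b + zmul a b';
  zmulA : forall i j l m (a : zc l m) (b : zc j l) (c : zc i j),
      zmul a (zmul b c) = zmul (zmul a b) c;
  zmul1l : forall i j (a : zc i j), zmul (zone j) a = a;
  zmul1r : forall i j (a : zc i j), zmul a (zone i) = a;
  zdiag : forall i, \dim (fullv : {vspace zc i i}) = 1%N;
  zlow : forall i j, (j < i)%R -> \dim (fullv : {vspace zc i j}) = 0%N
}.
Arguments zmul {k} z {i j l}.
Arguments zone {k} z i.

Record zhom (k : fieldType) (A B : zalg k) := ZHom {
  zh : forall i j, zc A i j -> zc B i j;
  zh_lin : forall i j (x : k) (a a' : zc A i j), zh (x *: a + a') = x *: zh a + zh a';
  zh_mul : forall i j l (a : zc A j l) (b : zc A i j),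
      zh (zmul A a b) = zmul B (zh a) (zh b);
  zh_one : forall i, zh (zone A i) = zone B i
}.
Arguments zh {k A B} z {i j}.

Record zmod (k : fieldType) (A : zalg k) := ZMod {
  mc : int -> lmodType k;
  mact : forall i j, mc j -> zc A i j -> mc i;
  mactDl : forall i j (x : k) (m m' : mc j) (a : zc A i j),
      mact (x *: m + m') a = x *: mact m a + mact m' a;
  mactDr : forall i j (x : k) (m : mc j) (a a' : zc A i j),
      mact m (x *: a + a') = x *: mact m a + mact m a';
  mactA : forall i j l (m : mc j) (a : zc A i j) (b : zc A l i),
      mact (mact m a) b = mact m (zmul A a b);
  mact1 : forall j (m : mc j), mact m (zone A j) = m
}.
Arguments mact {k A} z {i j}.

Definition Pmod (k : fieldType) (A : zalg k) (j : int) : zmod A.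
Proof.
refine (@ZMod k A (fun i => zc A i j) (fun i l (m : zc A l j) (a : zc A i l) => zmul A m a)
  _ _ _ _).
- by move=> i l x m m' a; rewrite zmulDl.
- by move=> i l x m a a'; rewrite zmulDr.
- by move=> i l l' m a b; rewrite zmulA.
- by move=> l m; rewrite zmul1r.
Defined.

Definition Res (k : fieldType) (A B : zalg k) (phi : zhom A B) (M : zmod B) : zmod A.
Proof.
refine (@ZMod k A (mc M) (fun i j (m : mc M j) (a : zc A i j) => mact M m (zh phi a))
  _ _ _ _).
- by move=> i j x m m' a; rewrite mactDl.
- by move=> i j x m a a'; rewrite zh_lin mactDr.
- by move=> i j l m a b; rewrite mactA zh_mul.
- by move=> j m; rewrite zh_one mact1.
Defined.

Definition is_hom (k : fieldType) (A : zalg k) (M N : zmod A)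
    (f : forall i, mc M i -> mc N i) : Prop :=
  (forall i (x : k) (m m' : mc M i), f i (x *: m + m') = x *: f i m + f i m') /\
  (forall i j (m : mc M j) (a : zc A i j), f i (mact M m a) = mact N (f j m) a).

(* M belongs to the class P: M is (isomorphic to) a finite direct sum of
   P_j's, i.e. there are homomorphisms iota_t : P_{j_t} -> M whose induced
   map (+)_t P_{j_t} -> M is bijective in every degree. *)
Definition inP (k : fieldType) (A : zalg k) (M : zmod A) : Prop :=
  exists js : seq int,
  exists iota : forall t : 'I_(size js), forall i, mc (Pmod A (nth 0 js t)) i -> mc M i,
    (forall t, is_hom (iota t)) /\
    (forall i, bijective
       (fun x : (forall t : 'I_(size js), zc A i (nth 0 js t)) =>
          \sum_(t < size js) iota t i (x t))).

Definition isS (k : fieldType) (A : zalg k) (j : int) (M : zmod A) : Prop :=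
  (exists m0 : mc M j, m0 <> 0 /\ forall m : mc M j, exists c : k, m = c *: m0) /\
  (forall i, i <> j -> forall m : mc M i, m = 0).

Definition fin_gen (k : fieldType) (A : zalg k) (M : zmod A) : Prop :=
  exists (P : zmod A) (f : forall i, mc P i -> mc M i),
    inP P /\ is_hom f /\ forall i (y : mc M i), exists x, f i x = y.

Definition ker_fin_gen (k : fieldType) (A : zalg k) (P M : zmod A)
    (f : forall i, mc P i -> mc M i) : Prop :=
  exists (P' : zmod A) (g : forall i, mc P' i -> mc P i),
    inP P' /\ is_hom g /\
    forall i (y : mc P i), f i y = 0 <-> exists x, g i x = y.

Definition coherent (k : fieldType) (A : zalg k) (M : zmod A) : Prop :=
  fin_gen M /\
  forall (P : zmod A) (f : forall i, mc P i -> mc M i),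
    inP P -> is_hom f -> ker_fin_gen f.

Definition zcoherent (k : fieldType) (A : zalg k) : Prop :=
  (forall j, coherent (Pmod A j)) /\
  (forall j (M : zmod A), isS j M -> coherent M).

(* Main.v *)
Require Import Defs.
From HB Require Import structures.
From mathcomp Require Import all_boot all_order all_algebra.
From Stdlib Require Import FunctionalExtensionality ClassicalEpsilon.
From Stdlib Require List.
Set Implicit Arguments. Unset Strict Implicit. Unset Printing Implicit Defensive.
Import GRing.Theory.
Local Open Scope ring_scope.

Lemma mactD (k : fieldType) (A : zalg k) (M : zmod A) i j (m m' : mc M j) (a : zc A i j) :
  mact M (m + m') a = mact M m a + mact M m' a.
Proof. by have := mactDl 1 m m' a; rewrite !scale1r. Qed.

Lemma mactDr1 (k : fieldType) (A : zalg k) (M : zmod A) i j (m : mc M j) (a a' : zc A i j) :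
  mact M m (a + a') = mact M m a + mact M m a'.
Proof. by have := mactDr 1 m a a'; rewrite !scale1r. Qed.

Lemma xxx (V : zmodType) (x : V) : x = x + x -> x = 0.
Proof. by rewrite -{1}[x]addr0 => /addrI. Qed.

Lemma mact0l (k : fieldType) (A : zalg k) (M : zmod A) i j (a : zc A i j) :
  mact M (0 : mc M j) a = 0.
Proof. by apply: xxx; rewrite -mactD addr0. Qed.

Lemma mact0r (k : fieldType) (A : zalg k) (M : zmod A) i j (m : mc M j) :
  mact M m (0 : zc A i j) = 0.
Proof. by apply: xxx; rewrite -mactDr1 addr0. Qed.

Lemma mactZ1 (k : fieldType) (A : zalg k) (M : zmod A) j (m : mc M j) (c : k) :
  mact M m (c *: zone A j) = c *: m.
Proof. by have := mactDr c m (zone A j) 0; rewrite !addr0 mact0r addr0 mact1 => ->. Qed.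

Lemma hom0 (k : fieldType) (A : zalg k) (M N : zmod A) f (H : @is_hom k A M N f) i :
  f i 0 = 0.
Proof. by apply: xxx; have := H.1 i 1 0 0; rewrite !scale1r addr0. Qed.

Lemma homD (k : fieldType) (A : zalg k) (M N : zmod A) f (H : @is_hom k A M N f) i x y :
  f i (x + y) = f i x + f i y.
Proof. by have := H.1 i 1 x y; rewrite !scale1r. Qed.

Definition Zm (k : fieldType) (A : zalg k) : zmod A.
Proof.
refine (@ZMod k A (fun _ => 'rV[k]_0) (fun i j _ _ => 0) _ _ _ _).
- by move=> *; rewrite scaler0 addr0.
- by move=> *; rewrite scaler0 addr0.
- by [].
- by move=> j m; rewrite (thinmx0 m).
Defined.

Definition Sm (k : fieldType) (A : zalg k) (M N : zmod A) : zmod A.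
Proof.
refine (@ZMod k A (fun i => (mc M i * mc N i)%type)
   (fun i j x a => (mact M x.1 a, mact N x.2 a)) _ _ _ _).
- by move=> i j x [m1 m2] [m1' m2'] a /=; rewrite !mactDl.
- by move=> i j x [m1 m2] a a' /=; rewrite !mactDr.
- by move=> i j l [m1 m2] a b /=; rewrite !mactA.
- by move=> j [m1 m2] /=; rewrite !mact1.
Defined.

Fixpoint Dm (k : fieldType) (A : zalg k) (s : seq int) : zmod A :=
  match s with [::] => Zm A | j :: s' => Sm (Pmod A j) (Dm A s') end.

Lemma pairZD (k : fieldType) (V W : lmodType k) (x : k) (a c : V) (b d : W) :
  x *: ((a, b) : V * W) + (c, d) = (x *: a + c, x *: b + d).
Proof. by []. Qed.

Lemma zmul0l (k : fieldType) (A : zalg k) i j l (b : zc A i j) :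
  zmul A (0 : zc A j l) b = 0.
Proof. exact: (mact0l (Pmod A l) b). Qed.

Lemma ord_irr n (T : nat -> Type) (x : forall t : 'I_n, T t) m (H1 H2 : (m < n)%N) :
  x (Ordinal H1) = x (Ordinal H2).
Proof. by rewrite (bool_irrelevance H1 H2). Qed.

Lemma inP_Zm (k : fieldType) (A : zalg k) : inP (Zm A).
Proof.
exists [::].
exists (fun t i (x : mc (Pmod A (nth 0 [::] t)) i) => (0 : mc (Zm A) i)).
split.
  by move=> t; split => *; rewrite /= ?scaler0 ?addr0.
move=> i; exists (fun (_ : mc (Zm A) i) (t : 'I_(size [::])) => (0 : zc A i (nth 0 [::] t))).
  by move=> x; apply: functional_extensionality_dep => -[].
move=> y; transitivity (0 : 'rV[k]_0); [exact: thinmx0 | symmetry; exact: thinmx0].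
Qed.

Definition iotaC (k : fieldType) (A : zalg k) (M : zmod A) (j : int) (js : seq int)
  (iota : forall t : 'I_(size js), forall i, mc (Pmod A (nth 0 js t)) i -> mc M i)
  (t : 'I_(size (j :: js))) : forall i, mc (Pmod A (nth 0 (j :: js) t)) i -> mc (Sm (Pmod A j) M) i :=
  match t as t0 return forall i, mc (Pmod A (nth 0 (j :: js) t0)) i -> mc (Sm (Pmod A j) M) i with
  | Ordinal m Hm =>
    (match m as m0 return (m0 < (size js).+1)%N ->
        forall i, mc (Pmod A (nth 0 (j :: js) m0)) i -> mc (Sm (Pmod A j) M) i with
     | 0%N => fun _ i x => (x, 0)
     | m'.+1 => fun H i x => (0, iota (Ordinal (H : (m' < size js)%N)) i x)
     end) Hm
  end.

Definition ginvC (k : fieldType) (A : zalg k) (M : zmod A) (j : int) (js : seq int) i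
  (g : mc M i -> forall t : 'I_(size js), zc A i (nth 0 js t))
  (p : mc (Sm (Pmod A j) M) i) : forall t : 'I_(size (j :: js)), zc A i (nth 0 (j :: js) t) :=
  fun t => match t as t0 return zc A i (nth 0 (j :: js) t0) with
  | Ordinal m Hm =>
    (match m as m0 return (m0 < (size js).+1)%N -> zc A i (nth 0 (j :: js) m0) with
     | 0%N => fun _ => p.1
     | m'.+1 => fun H => g p.2 (Ordinal (H : (m' < size js)%N))
     end) Hm
  end.

Lemma sum_pair0 (k : fieldType) (V W : lmodType k) n (F : 'I_n -> W) :
  \sum_(t < n) ((0 : V, F t) : V * W) = (0, \sum_(t < n) F t).
Proof.
apply: (big_rec2 (fun (y1 : V * W) y2 => y1 = (0, y2))) => // t y1 y2 _ ->.
by rewrite -[X in X + _ = _]scale1r pairZD !scale1r addr0.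
Qed.

Lemma iotaC_lift (k : fieldType) (A : zalg k) (M : zmod A) (j : int) (js : seq int)
  (iota : forall t : 'I_(size js), forall i, mc (Pmod A (nth 0 js t)) i -> mc M i)
  (t : 'I_(size js)) i (z : zc A i (nth 0 js t)) :
  @iotaC k A M j js iota (lift ord0 t) i z = (0, iota t i z).
Proof.
case: t z => m Hm z /=; congr pair.
move: (lift_subproof _ _) => H; have E := bool_irrelevance H Hm; by rewrite E.
Qed.

Lemma inP_cons (k : fieldType) (A : zalg k) (M : zmod A) (j : int) :
  inP M -> inP (Sm (Pmod A j) M).
Proof.
move=> [js [iota [Hh Hb]]].
exists (j :: js); exists (@iotaC k A M j js iota); split.
  move=> [[|m] Hm]; split => /=.
  - by move=> i x a a'; rewrite pairZD scaler0 addr0.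
  - by move=> i l a b; rewrite (mact0l M).
  - by move=> i x a a'; rewrite pairZD (Hh _).1 scaler0 addr0.
  - by move=> i l a b; rewrite (Hh _).2 zmul0l.
move=> i; have [g Hgf Hfg] := Hb i.
have E : forall x : (forall t : 'I_(size (j :: js)), zc A i (nth 0 (j :: js) t)),
  \sum_(t < size (j :: js)) @iotaC k A M j js iota t i (x t) =
  (x ord0, \sum_(t < size js) iota t i (x (lift ord0 t))).
  move=> x; rewrite big_ord_recl.
  under eq_bigr => t _ do rewrite iotaC_lift.
  by rewrite sum_pair0 /= -[X in X + _ = _]scale1r pairZD !scale1r add0r addr0.
apply: (@Bijective _ _ _ (@ginvC k A M j js i g)).
  move=> x; rewrite E; apply: functional_extensionality_dep => -[[|m] Hm] /=.
    by rewrite (bool_irrelevance Hm (ltn0Sn _)).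
  have := Hgf (fun t => x (lift ord0 t)); move=> /= ->.
  rewrite /lift; move: (lift_subproof _ _) => H; by rewrite (bool_irrelevance H Hm).
move=> [a y]; rewrite E /=; congr pair.
rewrite -[RHS](Hfg y) /=; apply: eq_bigr => -[m Hm] _; congr (iota _ i _).
rewrite /lift /=; move: (lift_subproof _ _) => H; by rewrite (bool_irrelevance H Hm).
Qed.

Lemma inP_Dm (k : fieldType) (A : zalg k) (s : seq int) : inP (Dm A s).
Proof. elim: s => [|j s IH] /=; [exact: inP_Zm | exact: inP_cons]. Qed.

Definition gl (k : fieldType) (A : zalg k) (M : zmod A) := seq {j : int & mc M j}.

Fixpoint uu (k : fieldType) (A : zalg k) (M : zmod A) (L : seq {j : int & mc M j})
  : forall i, mc (Dm A (map tag L)) i -> mc M i :=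
  match L as L0 return forall i, mc (Dm A (map tag L0)) i -> mc M i with
  | [::] => fun i _ => 0
  | p :: L' => fun i (x : (zc A i (tag p) * mc (Dm A (map tag L')) i)%type) => mact M (tagged p) x.1 + @uu k A M L' i x.2
  end.
Arguments uu {k A M} L i.

Lemma uu_hom (k : fieldType) (A : zalg k) (M : zmod A) (L : seq {j : int & mc M j}) :
  is_hom (uu L).
Proof.
elim: L => [|p L [IH1 IH2]]; split => /=.
- by move=> *; rewrite scaler0 addr0.
- by move=> *; rewrite mact0l.
- move=> i x [a r] [a' r'] /=.
  by rewrite IH1 mactDr scalerDr addrACA.
- move=> i j [a r] b /=.
  by rewrite IH2 mactD mactA.
Qed.

Definition submod (k : fieldType) (A : zalg k) (M : zmod A) (S : forall i, mc M i -> Prop) :=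
  [/\ (forall i, S i 0), (forall i x y, S i x -> S i y -> S i (x + y)) &
      (forall i j (m : mc M j) (a : zc A i j), S j m -> S i (mact M m a))].

Lemma img_submod (k : fieldType) (A : zalg k) (M : zmod A) (L : seq {j : int & mc M j}) :
  submod (fun i y => exists x, uu L i x = y).
Proof.
have H := uu_hom L; split.
- by move=> i; exists 0; rewrite (hom0 H).
- by move=> i _ _ [x <-] [y <-]; exists (x + y); rewrite (homD H).
- by move=> i j _ a [x <-]; exists (mact _ x a); rewrite H.2.
Qed.

Lemma img_min (k : fieldType) (A : zalg k) (M : zmod A) (L : seq {j : int & mc M j})
  (S : forall i, mc M i -> Prop) :
  submod S -> (forall p, List.In p L -> S (tag p) (tagged p)) -> forall i x, S i (uu L i x).
Proof.
move=> [S0 SD SM]; elim: L => [|p L IH] HL i x /=; first exact: S0.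
apply: SD; first by apply: SM; apply: HL; left.
by apply: IH => q Hq; apply: HL; right.
Qed.

Lemma uu0 (k : fieldType) (A : zalg k) (M : zmod A) (L : seq {j : int & mc M j}) i :
  uu L i 0 = 0.
Proof. exact: (hom0 (uu_hom L)). Qed.

Lemma gen_in_img (k : fieldType) (A : zalg k) (M : zmod A) (L : seq {j : int & mc M j}) p :
  List.In p L -> exists x, uu L (tag p) x = tagged p.
Proof.
elim: L => [//|q L IH] /= [<-|/IH [x Hx]].
  by exists (zone A (tag q), 0) => /=; rewrite mact1 uu0 addr0.
by exists (0, x) => /=; rewrite mact0r add0r.
Qed.

Lemma inP_ind (k : fieldType) (A : zalg k) (M : zmod A) (js : seq int)
  (iota : forall t : 'I_(size js), forall i, mc (Pmod A (nth 0 js t)) i -> mc M i)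
  (Hb : forall i, bijective
       (fun x : (forall t : 'I_(size js), zc A i (nth 0 js t)) =>
          \sum_(t < size js) iota t i (x t)))
  (S : forall i, mc M i -> Prop) :
  (forall i, S i 0) -> (forall i x y, S i x -> S i y -> S i (x + y)) ->
  (forall t i z, S i (iota t i z)) -> forall i y, S i y.
Proof.
move=> S0 SD Hi i y; have [g _ Hfg] := Hb i.
rewrite -(Hfg y); apply: (big_ind (S i) (S0 i) (SD i)) => t _; exact: Hi.
Qed.

Lemma submod_pre (k : fieldType) (A : zalg k) (M N : zmod A) f (S : forall i, mc N i -> Prop) :
  @is_hom k A M N f -> submod S -> submod (fun i x => S i (f i x)).
Proof.
move=> H [S0 SD SM]; split.
- by move=> i; rewrite (hom0 H).
- by move=> i x y ? ?; rewrite (homD H); apply: SD.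
- by move=> i j m a ?; rewrite H.2; apply: SM.
Qed.

Lemma In_map (T U : Type) (f : T -> U) (x : T) (s : seq T) :
  List.In x s -> List.In (f x) (map f s).
Proof. elim: s => //= y s IH [->|/IH H]; [by left | by right]. Qed.

Lemma In_mem (T : eqType) (x : T) (s : seq T) : x \in s -> List.In x s.
Proof. elim: s => //= y s IH; rewrite in_cons => /orP [/eqP ->|/IH H]; [by left | by right]. Qed.

Lemma In_cat (T : Type) (x : T) (s1 s2 : seq T) :
  List.In x s1 \/ List.In x s2 -> List.In x (s1 ++ s2).
Proof.
elim: s1 => [[]//|y s1 IH] /= [[->|H]|H]; first by left.
  by right; apply: IH; left.
by right; apply: IH; right.
Qed.

Lemma In_flatten (T : Type) (x : T) (s : seq T) (ss : seq (seq T)) :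
  List.In x s -> List.In s ss -> List.In x (flatten ss).
Proof.
move=> Hx; elim: ss => //= s' ss IH [E|H]; apply: In_cat; first by left; rewrite E.
by right; apply: IH.
Qed.

Lemma fg_gens (k : fieldType) (A : zalg k) (M : zmod A) :
  fin_gen M -> exists L : seq {j : int & mc M j}, forall i y, exists x, uu L i x = y.
Proof.
move=> [P [f [[js [iota [Hh Hb]]] [Hf Hs]]]].
pose G := fun t : 'I_(size js) =>
  existT (fun j => mc M j) (nth 0 js t) (f _ (iota t _ (zone A (nth 0 js t)))).
exists (map G (enum 'I_(size js))).
have [S0 SD SM] := img_submod (map G (enum 'I_(size js))).
move=> i y; have [z <-] := Hs i y.
apply: (inP_ind Hb (S := fun i z => exists x, _ = f i z)).
- by move=> i'; rewrite (hom0 Hf); exact: S0.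
- by move=> i' a b ? ?; rewrite (homD Hf); apply: SD.
move=> t i' z'.
have -> : iota t i' z' = mact P (iota t _ (zone A (nth 0 js t))) z'.
  by rewrite -(Hh t).2 /= zmul1l.
rewrite Hf.2; apply: SM.
exact: (gen_in_img (In_map G (In_mem (mem_enum _ t)))).
Qed.

Lemma ker_from_gens (k : fieldType) (A : zalg k) (P N : zmod A) f (Hf : @is_hom k A P N f)
  (LK : seq {j : int & mc P j}) :
  (forall p, List.In p LK -> f (tag p) (tagged p) = 0) ->
  (forall i y, f i y = 0 -> exists x, uu LK i x = y) -> ker_fin_gen f.
Proof.
move=> Hin Hcov; exists (Dm A (map tag LK)); exists (uu LK); split; first exact: inP_Dm.
split; first exact: uu_hom.
move=> i y; split; first exact: Hcov.
move=> [x <-].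
have := @img_min k A P LK (fun i y => f i y = 0).
apply => //; split.
- by move=> i'; rewrite (hom0 Hf).
- by move=> i' a b Ha Hb; rewrite (homD Hf) Ha Hb addr0.
- by move=> i' j m a Hm; rewrite Hf.2 Hm mact0l.
Qed.

Lemma Res_submod (k : fieldType) (A B : zalg k) (phi : zhom A B) (P : zmod B)
  (S : forall i, mc P i -> Prop) : submod S -> @submod k A (Res phi P) S.
Proof. by move=> [S0 SD SM]; split => // i j m a Hm; apply: SM. Qed.

Lemma Res_hom (k : fieldType) (A B : zalg k) (phi : zhom A B) (P N : zmod B) f :
  @is_hom k B P N f -> @is_hom k A (Res phi P) (Res phi N) f.
Proof. by move=> [H1 H2]; split => // i j m a; apply: H2. Qed.

Lemma Res_fg (k : fieldType) (A B : zalg k) (phi : zhom A B) (P : zmod B) :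
  (forall j, coherent (Res phi (Pmod B j))) -> inP P ->
  exists LA : seq {j : int & mc (Res phi P) j}, forall i y, exists x, uu LA i x = y.
Proof.
move=> HQ [js [iota [Hh Hb]]].
have HL : forall t : 'I_(size js), exists L : seq {j : int & mc (Res phi (Pmod B (nth 0 js t))) j},
    forall i y, exists x, uu L i x = y.
  by move=> t; apply: fg_gens; exact: (HQ _).1.
pose Lt := fun t => proj1_sig (constructive_indefinite_description _ (HL t)).
have HLt : forall t i y, exists x, uu (Lt t) i x = y.
  by move=> t; exact: (proj2_sig (constructive_indefinite_description _ (HL t))).
pose G := fun (t : 'I_(size js)) (p : {j : int & mc (Res phi (Pmod B (nth 0 js t))) j}) =>
  existT (fun j => mc (Res phi P) j) (tag p) (iota t _ (tagged p)).
pose LA := flatten [seq map (G t) (Lt t) | t <- enum 'I_(size js)].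
exists LA.
have [S0 SD SM] := img_submod LA.
apply: (inP_ind Hb) => // t i z.
have [x <-] := HLt t i z.
apply: (@img_min k A _ (Lt t) (fun i z => exists x, uu LA i x = iota t i z)).
- split.
  + by move=> i'; rewrite (hom0 (Hh t)).
  + by move=> i' a b ? ?; rewrite (homD (Hh t)); apply: SD.
  + move=> i' j m a ?.
    have -> : iota t i' (mact (Res phi (Pmod B (nth 0 js t))) m a) =
              mact (Res phi P) (iota t j m) a by exact: (Hh t).2.
    exact: SM.
- move=> p Hp.
  have H : List.In (G t p) LA.
    apply: (In_flatten (s := map (G t) (Lt t))); first exact: In_map.
    exact: (In_map (fun t => map (G t) (Lt t)) (In_mem (mem_enum _ t))).
  exact: (gen_in_img H).
Qed.

Lemma In_map_inv (T U : Type) (f : T -> U) (q : U) (s : seq T) :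
  List.In q (map f s) -> exists p, List.In p s /\ q = f p.
Proof.
elim: s => //= x s IH [<-|/IH [p [H1 H2]]]; first by exists x; split => //; left.
by exists p; split => //; right.
Qed.

Lemma hom_comp (k : fieldType) (A : zalg k) (M N O : zmod A) f g :
  @is_hom k A M N f -> @is_hom k A N O g -> is_hom (fun i x => g i (f i x)).
Proof.
move=> [F1 F2] [G1 G2]; split.
- by move=> i x a b; rewrite F1 G1.
- by move=> i j m a; rewrite F2 G2.
Qed.

Lemma kerA (k : fieldType) (A : zalg k) (M N : zmod A) f (Hf : @is_hom k A M N f)
  (L : seq {j : int & mc M j}) :
  (forall i y, exists x, uu L i x = y) -> coherent N ->
  exists LK : seq {j : int & mc M j},
    (forall p, List.In p LK -> f (tag p) (tagged p) = 0) /\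
    (forall i y, f i y = 0 -> exists x, uu LK i x = y).
Proof.
move=> HL [_ HN].
pose h := fun i (z : mc (Dm A (map tag L)) i) => f i (uu L i z).
have Hh : is_hom h.
  have [U1 U2] := uu_hom L; split.
  - by move=> i x a b; rewrite /h U1 Hf.1.
  - by move=> i j m a; rewrite /h U2 Hf.2.
have [P2 [g2 [HP2 [Hg2 Hker]]]] := HN _ h (inP_Dm A _) Hh.
have [L2 HL2] : exists L2 : seq {j : int & mc P2 j}, forall i y, exists x, uu L2 i x = y.
  apply: fg_gens; exists P2; exists (fun i x => x); split => //; split => //.
  by move=> i y; exists y.
pose G := fun p : {j : int & mc P2 j} =>
  existT (fun j => mc M j) (tag p) (uu L _ (g2 _ (tagged p))).
exists (map G L2); split.
  move=> q Hq; have [p [_ E]] := In_map_inv Hq; subst q => /=.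
  apply: (proj2 (Hker (tag p) (g2 (tag p) (tagged p)))); by exists (tagged p).
move=> i y Hy; have [z Hz] := HL i y.
have [w Hw] : exists w, g2 i w = z by apply/(Hker i z).1; rewrite /h Hz.
have [x Hx] := HL2 i w.
rewrite -Hz -Hw -Hx.
apply: (@img_min k A _ L2 (fun i w => exists x, uu (map G L2) i x = uu L i (g2 i w))).
  exact: (submod_pre (S := fun i y => exists x, uu (map G L2) i x = y)
            (f := fun i w => uu L i (g2 i w)) (hom_comp Hg2 (uu_hom L)) (img_submod _)).
move=> p Hp.
exact: (gen_in_img (In_map G Hp)).
Qed.

Lemma main_ker (k : fieldType) (A B : zalg k) (phi : zhom A B) (P N : zmod B) f :
  (forall j, coherent (Res phi (Pmod B j))) -> coherent (Res phi N) ->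
  inP P -> @is_hom k B P N f -> ker_fin_gen f.
Proof.
move=> HQ HN HP Hf.
have [LA HLA] := Res_fg HQ HP.
have [LK [Hin Hcov]] := kerA (Res_hom phi Hf) HLA HN.
apply: (ker_from_gens Hf (LK := LK : seq {j : int & mc P j})) => // i y Hy.
have [x <-] := Hcov i y Hy.
apply: (@img_min k A (Res phi P) LK (fun i y => exists x, uu (LK : seq {j : int & mc P j}) i x = y)).
  exact: Res_submod (img_submod _).
move=> p Hp; exact: (gen_in_img (L := (LK : seq {j : int & mc P j})) Hp).
Qed.

Lemma gens_coh (k : fieldType) (A : zalg k) (M : zmod A) (L : seq {j : int & mc M j}) :
  (forall i y, exists x, uu L i x = y) -> fin_gen M.
Proof.
move=> HL; exists (Dm A (map tag L)); exists (uu L); split; first exact: inP_Dm.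
by split; [exact: uu_hom | exact: HL].
Qed.

Theorem proposition1p6 (k : fieldType) (A B : zalg k) (phi : zhom A B) :
  zcoherent A ->
  (forall j : int, coherent (Res phi (Pmod B j))) ->
  zcoherent B.
Proof.
move=> [_ HAS] HQ; split.
  move=> j; split.
    apply: (gens_coh (L := [:: existT (fun i => mc (Pmod B j) i) j (zone B j)])).
    move=> i y.
    have [S0 SD SM] := img_submod [:: existT (fun i => mc (Pmod B j) i) j (zone B j)].
    have Hg := @gen_in_img k B (Pmod B j) [:: existT (fun i => mc (Pmod B j) i) j (zone B j)]
       (existT (fun i => mc (Pmod B j) i) j (zone B j)) (or_introl erefl).
    have E : mact (Pmod B j) (zone B j) y = y := zmul1l _.
    by have := SM i j (zone B j) y Hg; rewrite E.
  move=> P f HP Hf; exact: main_ker HQ (HQ j) HP Hf.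
move=> j M HM; split.
  have [[m0 [Hm0 Hc]] Hz] := HM.
  apply: (gens_coh (L := [:: existT (fun i => mc M i) j m0])).
  have [S0 SD SM] := img_submod [:: existT (fun i => mc M i) j m0].
  have Hg := @gen_in_img k B M [:: existT (fun i => mc M i) j m0]
       (existT (fun i => mc M i) j m0) (or_introl erefl).
  move=> i y; case: (eqVneq i j) => [E|ne].
    subst i; have [c ->] := Hc y.
    rewrite -mactZ1; exact: (SM j j m0 _ Hg).
  by rewrite (Hz i (elimN eqP ne) y); exact: S0.
move=> P f HP Hf; apply: main_ker HQ _ HP Hf.
apply: HAS; exact: HM.
Qed.
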